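(* Let $\mathcal{H}_A,\mathcal{H}_B$ be finite-dimensional Hilbert spaces with fixed reference bases $\{|i\rangle_A\}$, $\{|m\rangle_B\}$, and product basis on $\mathcal{H}_A\otimes\mathcal{H}_B$. For every state $\rho_{AB}$ with reduced state $\rho_B$, $$C_{l_1}(\rho_{AB})\geq C^{A|B}_{l_1}(\rho_{AB})+C_{l_1}(\rho_B).$$
   Context: For a state $\rho$ on a space with reference basis $\{|k\rangle\}$, $C_{l_1}(\rho)=\sum_{k\neq l}|\langle k|\rho|l\rangle|$ (for $\rho_{AB}$ the product basis is used). Writing $\rho_{AB}=\sum_{i,j}|i\rangle\langle j|_A\otimes\rho^B_{ij}$ with $\rho^B_{ij}=\langle i|\rho_{AB}|j\rangle_A$ operators on $\mathcal{H}_B$, the $l_1$ norm of IQ coherence is $C^{A|B}_{l_1}(\rho_{AB})=\sum_{i\neq j}\|\rho^B_{ij}\|_{\mathrm{tr}}$, where $\|X\|_{\mathrm{tr}}=\mathrm{Tr}\sqrt{X^\dagger X}$. *)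

(* Defs.v *)
(* Complex scalars: an arbitrary numeric closed field C
   (e.g. the complex numbers); conjugation is Num.conj ( ^* ). *)
From Stdlib Require Import ClassicalEpsilon.
From mathcomp Require Import all_boot all_order all_algebra.
Set Implicit Arguments. Unset Strict Implicit. Unset Printing Implicit Defensive.
Import Order.TTheory GRing.Theory Num.Theory.
Local Open Scope ring_scope.

Section QDefs.
Variable C : numClosedFieldType.

Definition dagger m n (X : 'M[C]_(m, n)) : 'M[C]_(n, m) :=
  \matrix_(i, j) (X j i)^*.

Definition psd n (A : 'M[C]_n) : Prop :=
  forall v : 'cV[C]_n, 0 <= (dagger v *m A *m v) 0 0.

Definition is_state n (rho : 'M[C]_n) : Prop := psd rho /\ \tr rho = 1.

(* the (unique) positive semidefinite square root of a matrix,
   chosen by classical choice (0 if it does not exist) *)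
Definition psd_sqrt n (M : 'M[C]_n) : 'M[C]_n :=
  epsilon (inhabits 0) (fun S : 'M[C]_n => psd S /\ S *m S = M).

Definition trnorm m n (X : 'M[C]_(m, n)) : C := \tr (psd_sqrt (dagger X *m X)).

Definition Cl1 n (rho : 'M[C]_n) : C :=
  \sum_(k < n) \sum_(l < n | k != l) `|rho k l|.

(* H_A (x) H_B, product basis |i>|m> indexed by mxvec_index i m *)
Definition blockB nA nB (rho : 'M[C]_(nA * nB)) (i j : 'I_nA) : 'M[C]_nB :=
  \matrix_(m, n) rho (mxvec_index i m) (mxvec_index j n).

Definition ptraceA nA nB (rho : 'M[C]_(nA * nB)) : 'M[C]_nB :=
  \sum_(i < nA) blockB rho i i.

Definition Cl1_IQ nA nB (rho : 'M[C]_(nA * nB)) : C :=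
  \sum_(i < nA) \sum_(j < nA | i != j) trnorm (blockB rho i j).

End QDefs.

(* Main.v *)
Require Import Defs.
From Stdlib Require Import ClassicalEpsilon.
From mathcomp Require Import all_boot all_order all_algebra.
From mathcomp Require Import ring.
Import Order.TTheory GRing.Theory Num.Theory.
Local Open Scope ring_scope.

Lemma mxvec_index_eq nA nB (i j : 'I_nA) (m n : 'I_nB) :
  (mxvec_index i m == mxvec_index j n) = ((i, m) == (j, n)).
Proof.
by rewrite /mxvec_index (inj_eq (@cast_ord_inj _ _ _)) (inj_eq enum_rank_inj).
Qed.

Lemma sum_mxvec (R : nmodType) nA nB (G : 'I_(nA * nB) -> R) :
  \sum_k G k = \sum_(i < nA) \sum_(m < nB) G (mxvec_index i m).
Proof.
rewrite pair_big /=.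
rewrite (reindex (fun p : 'I_nA * 'I_nB => mxvec_index p.1 p.2)) //=.
case: (curry_mxvec_bij nA nB) => g h1 h2; exists g => x _.
  by case: x => a b; rewrite -[mxvec_index a b]/(uncurry (@mxvec_index nA nB) (a, b)) h1.
by have := h2 x; case: (g x) => a b /= ->.
Qed.

Set Implicit Arguments.
Section Aux.
Variable C : numClosedFieldType.

Lemma daggerE m n (X : 'M[C]_(m, n)) : dagger X = map_mx Num.conj (trmx X).
Proof. by apply/matrixP => i j; rewrite !mxE. Qed.

Lemma dagger_mul m n p (A : 'M[C]_(m, n)) (B : 'M[C]_(n, p)) :
  dagger (A *m B) = dagger B *m dagger A.
Proof. by rewrite !daggerE trmx_mul map_mxM. Qed.

Lemma daggerK m n (A : 'M[C]_(m, n)) : dagger (dagger A) = A.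
Proof. by apply/matrixP => i j; rewrite !mxE conjCK. Qed.

Lemma dagger_delta n (k : 'I_n) : dagger (delta_mx k 0 : 'cV[C]_n) = delta_mx 0 k.
Proof. by apply/matrixP => i j; rewrite !mxE rmorph_nat andbC. Qed.

Lemma quad_delta n (S : 'M[C]_n) (k l : 'I_n) :
  (dagger (delta_mx k 0 : 'cV[C]_n) *m S *m (delta_mx l 0 : 'cV[C]_n)) 0 0 = S k l.
Proof. by rewrite dagger_delta -rowE -colE !mxE. Qed.

Lemma gram_ge0 m (y : 'cV[C]_m) : 0 <= (dagger y *m y) 0 0.
Proof.
rewrite mxE; apply: sumr_ge0 => i _; rewrite mxE mulrC; exact: mul_conjC_ge0.
Qed.

Lemma diag_form n (d : 'rV[C]_n) (w : 'cV[C]_n) :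
  (forall k, 0 <= d 0 k) -> 0 <= (dagger w *m diag_mx d *m w) 0 0.
Proof.
move=> hd; rewrite -mulmxA mul_diag_mx mxE; apply: sumr_ge0 => i _.
rewrite !mxE mulrCA; apply: mulr_ge0 => //.
rewrite mulrC; exact: mul_conjC_ge0.
Qed.

Lemma psd_sqrt_exists n (X : 'M[C]_n) :
  exists S : 'M[C]_n, psd S /\ S *m S = dagger X *m X.
Proof.
set A := dagger X *m X.
have hA : A \is normalmx.
  have e : map_mx Num.conj (trmx A) = A by rewrite -daggerE /A dagger_mul daggerK.
  by apply/normalmxP; rewrite e.
move/orthomx_spectralP: hA.
set P := spectralmx A; set d := spectral_diag A => eA.
have Pu : P \is unitarymx := spectral_unitarymx A.
have iP : invmx P = dagger P by rewrite invmx_unitary // daggerE.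
have PP : P *m dagger P = 1%:M by rewrite daggerE; apply/unitarymxP.
rewrite iP in eA.
have hd : forall k, 0 <= d 0 k.
  move=> k.
  have PAP : P *m A *m dagger P = diag_mx d.
    by rewrite eA !mulmxA PP mul1mx -!mulmxA PP mulmx1.
  pose ek := (delta_mx k 0 : 'cV[C]_n).
  have -> : d 0 k = (dagger ek *m (P *m A *m dagger P) *m ek) 0 0.
    by rewrite quad_delta PAP mxE eqxx mulr1n.
  have -> : dagger ek *m (P *m A *m dagger P) *m ek
      = dagger (X *m (dagger P *m ek)) *m (X *m (dagger P *m ek)).
    by rewrite !dagger_mul daggerK /A !mulmxA.
  exact: gram_ge0.
pose e := map_mx sqrtC d.
exists (dagger P *m diag_mx e *m P); split.
  move=> v.
  have -> : dagger v *m (dagger P *m diag_mx e *m P) *m v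
      = dagger (P *m v) *m diag_mx e *m (P *m v).
    by rewrite dagger_mul !mulmxA.
  by apply: diag_form => k; rewrite mxE sqrtC_ge0.
rewrite eA.
have -> : dagger P *m diag_mx e *m P *m (dagger P *m diag_mx e *m P)
  = dagger P *m (diag_mx e *m (P *m dagger P) *m diag_mx e) *m P.
  by rewrite !mulmxA.
rewrite PP mulmx1 mulmx_diag; congr (_ *m diag_mx _ *m _).
by apply/rowP => k; rewrite !mxE -expr2 sqrtCK.
Qed.



Lemma psd_sqrt_spec n (X : 'M[C]_n) :
  psd (psd_sqrt (dagger X *m X)) /\
  psd_sqrt (dagger X *m X) *m psd_sqrt (dagger X *m X) = dagger X *m X.
Proof.
exact: (epsilon_spec (inhabits 0) _ (psd_sqrt_exists (n:=n) X)).
Qed.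

Lemma dagger_addZ n (u w : 'cV[C]_n) c :
  dagger (u + c *: w) = dagger u + c^* *: dagger w.
Proof. by apply/matrixP => i j; rewrite !mxE rmorphD rmorphM. Qed.

Definition qf n (S : 'M[C]_n) (u w : 'cV[C]_n) := (dagger u *m S *m w) 0 0.

Lemma qf_expand n (S : 'M[C]_n) u w c :
  qf S (u + c *: w) (u + c *: w) =
  qf S u u + c^* * c * qf S w w + c * qf S u w + c^* * qf S w u.
Proof.
rewrite /qf dagger_addZ !(mulmxDl, mulmxDr).
rewrite -!(scalemxAl, scalemxAr).
set A1 := dagger u *m S *m u; set A2 := dagger u *m S *m w.
set A3 := dagger w *m S *m u; set A4 := dagger w *m S *m w.
rewrite !mxE.
ring.
Qed.

Lemma psd_herm n (S : 'M[C]_n) : psd S -> forall k l, S l k = (S k l)^*.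
Proof.
move=> hS k l.
have qd : forall a b, qf S (delta_mx a 0) (delta_mx b 0) = S a b.
  by move=> a b; rewrite /qf quad_delta.
have real : forall v, (qf S v v)^* = qf S v v.
  by move=> v; apply: geC0_conj; apply: hS.
have R1 := real (delta_mx k 0 + 1 *: delta_mx l 0).
have Ri := real (delta_mx k 0 + 'i *: delta_mx l 0).
rewrite qf_expand !qd in R1; rewrite qf_expand !qd in Ri.
have xr : (S k k)^* = S k k by rewrite -qd real.
have yr : (S l l)^* = S l l by rewrite -qd real.
move: R1 Ri.
rewrite !(rmorphD, rmorphM) /= !conjCK xr yr conjCi rmorph1 => R1 Ri.
move/eqP: R1; rewrite -subr_eq0 => /eqP R1.
move/eqP: Ri; rewrite -subr_eq0 => /eqP Ri.
have E1 : (S k l) + (S l k) - ((S k l)^* + (S l k)^*) = 0.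
  rewrite -oppr0 -R1; ring.
have hi : 'i * 'i + 1 = 0 :> C by rewrite -expr2 sqrCi addNr.
have D2 : (- 'i * (S k l)^* + 'i * (S l k)^*) - ('i * (S k l) - 'i * (S l k)) = 0.
  rewrite -Ri; ring.
have E2 : ((S k l)^* - (S l k)^*) - (-(S k l) + (S l k)) = 0.
  have -> : ((S k l)^* - (S l k)^*) - (-(S k l) + (S l k)) = 'i * ((- 'i * (S k l)^* + 'i * (S l k)^*) - ('i * (S k l) - 'i * (S l k)))
      + ('i * 'i + 1) * ((S k l)^* - (S l k)^* + (S k l) - (S l k)) by ring.
  by rewrite D2 hi !mul0r mulr0 addr0.
have : ((S l k) - (S k l)^*) *+ 2 = 0.
  have -> : ((S l k) - (S k l)^*) *+ 2 = ((S k l) + (S l k) - ((S k l)^* + (S l k)^*)) - (((S k l)^* - (S l k)^*) - (-(S k l) + (S l k))) by ring.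
  by rewrite E1 E2 subr0.
by move/eqP; rewrite mulrn_eq0 /= subr_eq0 => /eqP.
Qed.


Lemma sum_sq_le (I : finType) (f : I -> C) : (forall i, 0 <= f i) ->
  \sum_i f i ^+ 2 <= (\sum_i f i) ^+ 2.
Proof.
move=> f0; rewrite [X in _ <= X]expr2 big_distrl /=; apply: ler_sum => i _.
rewrite expr2; apply: ler_wpM2l => //.
rewrite (bigD1 i) //= lerDl; exact: sumr_ge0.
Qed.

Lemma trnorm_le n (X : 'M[C]_n) :
  trnorm X <= \sum_(j < n) \sum_(i < n) `|X i j|.
Proof.
rewrite /trnorm; have [hS hSS] := psd_sqrt_spec X.
move: hS hSS; set S := psd_sqrt _ => hS hSS.
rewrite /mxtrace; apply: ler_sum => j _.
have S0 : 0 <= S j j by have := hS (delta_mx j 0); rewrite quad_delta.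
have H1 : S j j ^+ 2 <= (S *m S) j j.
  rewrite mxE (bigD1 j) //= expr2 lerDl; apply: sumr_ge0 => k _.
  rewrite (psd_herm hS j k); exact: mul_conjC_ge0.
have H2 : (dagger X *m X) j j <= (\sum_i `|X i j|) ^+ 2.
  rewrite mxE; under eq_bigr do rewrite mxE -normCKC.
  by apply: sum_sq_le.
rewrite -(ler_pXn2r (n:=2)) // ?nnegrE ?sumr_ge0 //.
by apply: le_trans H1 _; rewrite hSS.
Qed.

End Aux.

Unset Implicit Arguments.

Theorem proposition5 (C : numClosedFieldType) (nA nB : nat)
  (rho : 'M[C]_(nA * nB)) :
  is_state rho ->
  Cl1_IQ rho + Cl1 (ptraceA rho) <= Cl1 rho.
Proof.
move=> _.
pose B (i j : 'I_nA) (m n : 'I_nB) : C := `|rho (mxvec_index i m) (mxvec_index j n)|.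
pose T (i j : 'I_nA) : C := \sum_(m < nB) \sum_(n < nB)
   (if (i, m) != (j, n) then B i j m n else 0).
have E : Cl1 rho = \sum_i \sum_j T i j.
  rewrite /Cl1 sum_mxvec; apply: eq_bigr => i _.
  rewrite /T [RHS]exchange_big /=; apply: eq_bigr => m _.
  rewrite big_mkcond sum_mxvec; apply: eq_bigr => j _; apply: eq_bigr => n _.
  by rewrite mxvec_index_eq.
have E2 : \sum_i \sum_j T i j = \sum_i T i i + \sum_i \sum_(j | i != j) T i j.
  rewrite -big_split /=; apply: eq_bigr => i _.
  by rewrite (bigD1 i) //=; congr (_ + _); apply: eq_bigl => j; rewrite eq_sym.
rewrite E E2 [in X in _ <= X]addrC; apply: lerD.
  rewrite /Cl1_IQ; apply: ler_sum => i _; apply: ler_sum => j ij.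
  apply: le_trans (trnorm_le C (blockB (nB:=nB) rho i j)) _; rewrite /T exchange_big /=.
  rewrite le_eqVlt; apply/orP; left; apply/eqP; apply: eq_bigr => n _; apply: eq_bigr => m _.
  by rewrite xpair_eqE negb_and ij /B !mxE.
rewrite /Cl1 /T.
have -> : \sum_i \sum_(m < nB) \sum_(n < nB) (if (i, m) != (i, n) then B i i m n else 0)
  = \sum_(m < nB) \sum_(n < nB | m != n) \sum_i B i i m n.
  rewrite exchange_big /=; apply: eq_bigr => m _.
  rewrite exchange_big /= [RHS]big_mkcond /=; apply: eq_bigr => n _.
  case: (eqVneq m n) => [->|mn] /=.
    by rewrite big1 // => i _; rewrite eqxx.
  by apply: eq_bigr => i _; rewrite xpair_eqE negb_and mn orbT.
apply: ler_sum => m _; apply: ler_sum => n _.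
rewrite /ptraceA summxE.
apply: le_trans (ler_norm_sum _ _ _) _.
by rewrite le_eqVlt; apply/orP; left; apply/eqP; apply: eq_bigr => i _; rewrite /B mxE.
Qed.
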